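(* Let $i\ge 3$ and $k\ge 3$ be integers, let $p$ be a nonnegative integer, and put $r=\lfloor (L_i-1)/F_k\rfloor$. If $r\ge p$ and $(r,p)\ne(0,0)$, then $$g_p(L_i,L_{i+2},L_{i+k})=\begin{cases}(L_i-rF_k-1)L_{i+2}+(r+p)L_{i+k}-L_i & \text{if } (L_i-rF_k)L_{i+2}\ge F_{k-2}L_i,\\ (F_k-1)L_{i+2}+(r+p-1)L_{i+k}-L_i & \text{if } (L_i-rF_k)L_{i+2}< F_{k-2}L_i.\end{cases}$$
   Context: Fibonacci numbers: $F_0=0$, $F_1=1$, $F_n=F_{n-1}+F_{n-2}$. Lucas numbers: $L_0=2$, $L_1=1$, $L_n=L_{n-1}+L_{n-2}$. For positive integers $a_1,\dots,a_l$ with $\gcd(a_1,\dots,a_l)=1$ and an integer $n$, let $d(n;a_1,\dots,a_l)$ be the number of tuples $(x_1,\dots,x_l)$ of nonnegative integers with $a_1x_1+\dots+a_lx_l=n$. For a nonnegative integer $p$, the $p$-Frobenius number $g_p(a_1,\dots,a_l)$ is the largest integer $n$ with $d(n;a_1,\dots,a_l)\le p$. *)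

(* Defs.v *)
From mathcomp Require Import all_boot all_order all_algebra.
Set Implicit Arguments. Unset Strict Implicit. Unset Printing Implicit Defensive.
Import Order.TTheory GRing.Theory Num.Theory.

Fixpoint fib (n : nat) : nat :=
  match n with
  | 0 => 0
  | 1 => 1
  | (m.+1 as k).+1 => fib k + fib m
  end.

Fixpoint lucas (n : nat) : nat :=
  match n with
  | 0 => 2
  | 1 => 1
  | (m.+1 as k).+1 => lucas k + lucas m
  end.

(* dcount s n = number of tuples (x_1,...,x_l) of nonnegative integers with
   a_1 x_1 + ... + a_l x_l = n, where s = [:: a_1; ...; a_l] consists of
   positive integers (so each x_j <= n). *)
Fixpoint dcount (s : seq nat) (n : nat) : nat :=
  match s with
  | [::] => n == 0
  | a :: s' => \sum_(x < n.+1) (if a * x <= n then dcount s' (n - a * x) else 0)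
  end.

Definition dnum (n : int) (s : seq nat) : nat :=
  match n with
  | Posz m => dcount s m
  | Negz _ => 0
  end.

Definition is_p_frobenius (p : nat) (s : seq nat) (g : int) : Prop :=
  (dnum g s <= p)%N /\ (forall n : int, (g < n)%R -> (p < dnum n s)%N).

(* Main.v *)
Require Import Defs.
From mathcomp Require Import all_boot all_order all_algebra.
From mathcomp Require Import zify ring.
Import Order.TTheory GRing.Theory Num.Theory.

Lemma fibSS n : fib n.+2 = fib n.+1 + fib n. Proof. by []. Qed.
Lemma lucSS n : lucas n.+2 = lucas n.+1 + lucas n. Proof. by []. Qed.

Lemma lucas_add i k : lucas (i + k.+1) = fib k.+1 * lucas i.+1 + fib k * lucas i.
Proof.
suff : lucas (i + k.+1) = fib k.+1 * lucas i.+1 + fib k * lucas i /\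
       lucas (i + k.+2) = fib k.+2 * lucas i.+1 + fib k.+1 * lucas i by case.
elim: k => [|k [IH1 IH2]].
  rewrite !addnS addn0 lucSS; change (fib 1) with 1; change (fib 2) with 1;
  change (fib 0) with 0; lia.
split; first by [].
rewrite !addnS lucSS -!addnS IH1 IH2 (fibSS k.+1) (fibSS k); lia.
Qed.

Lemma lucas_pos n : 0 < lucas n.
Proof. by elim: n => [|[|n] IH] //=; rewrite addn_gt0 IH. Qed.

Lemma fib_pos n : 0 < fib n.+1.
Proof.
suff: 0 < fib n.+1 /\ 0 < fib n.+2 by case.
elim: n => [|n [H1 H2]] //; split => //; rewrite fibSS; lia.
Qed.

Lemma fib_mono n : fib n <= fib n.+1.
Proof. by case: n => // n; rewrite fibSS leq_addr. Qed.

Lemma coprime_lucS n : coprime (lucas n) (lucas n.+1).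
Proof.
elim: n => [|n IH] //.
by rewrite /coprime lucSS gcdnDl gcdnC.
Qed.

Lemma coprime_luc2 n : coprime (lucas n) (lucas (n + 2)).
Proof.
by rewrite addn2 /coprime lucSS gcdnDr; apply: coprime_lucS.
Qed.

Lemma luc_key i k : 2 <= k ->
  lucas (i + k) + fib (k - 2) * lucas i = fib k * lucas (i + 2).
Proof.
case: k => [|[|k]] // _.
have -> : k.+2 - 2 = k by lia.
rewrite (lucas_add i k.+1) addn2 lucSS (fibSS k); lia.
Qed.

Lemma luc_cGa i k : 2 <= k -> fib (k - 2) * lucas i <= lucas (i + k).
Proof.
case: k => [|[|k]] // _.
have -> : k.+2 - 2 = k by lia.
rewrite (lucas_add i k.+1). have := fib_mono k. nia.
Qed.

Lemma dcount_ext a s n N : 0 < a -> n <= N ->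
  dcount (a :: s) n = \sum_(x < N.+1) (if a * x <= n then dcount s (n - a * x) else 0).
Proof.
move=> a0 nN /=.
rewrite (big_ord_widen _ (fun x => if a * x <= n then dcount s (n - a * x) else 0) (_ : n.+1 <= N.+1)) //.
rewrite big_mkcond /=; apply: eq_bigr => x _.
case: ifP => // /negbT; rewrite -leqNgt => hx.
have -> : (a * x <= n) = false by apply/negbTE; rewrite -ltnNge; nia.
by [].
Qed.

Lemma dcount1 c m N : 0 < c -> m <= N ->
  dcount [:: c] m = \sum_(z < N.+1) (c * z == m : nat).
Proof.
move=> c0 mN; rewrite (@dcount_ext c [::] m N c0 mN); apply: eq_bigr => z _ /=.
case: leqP => h.
  by congr nat_of_bool; apply/eqP/eqP; lia.
by have -> : (c * z == m) = false by apply/eqP; lia.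
Qed.

Lemma dcount2 b c m N : 0 < b -> 0 < c -> m <= N ->
  dcount [:: b; c] m = \sum_(y < N.+1) \sum_(z < N.+1) (b * y + c * z == m : nat).
Proof.
move=> b0 c0 mN; rewrite (@dcount_ext b [:: c] m N b0 mN); apply: eq_bigr => y _.
case: leqP => h.
  rewrite (@dcount1 c (m - b * y) N c0 (_ : m - b * y <= N)); last by lia.
  by apply: eq_bigr => z _; congr nat_of_bool; apply/eqP/eqP; lia.
rewrite big1 // => z _; have -> : (b * y + c * z == m) = false by apply/eqP; lia.
by [].
Qed.

Lemma dcount3 a b c n : 0 < a -> 0 < b -> 0 < c ->
  dcount [:: a; b; c] n =
  #|[set t : 'I_n.+1 * ('I_n.+1 * 'I_n.+1) | a * t.1 + b * t.2.1 + c * t.2.2 == n]|.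
Proof.
move=> a0 b0 c0; rewrite (@dcount_ext a [:: b; c] n n a0 (leqnn n)).
transitivity (\sum_(x < n.+1) \sum_(yz : 'I_n.+1 * 'I_n.+1)
   (a * x + b * yz.1 + c * yz.2 == n : nat)).
  apply: eq_bigr => x _.
  rewrite -(pair_bigA _ (fun (y z : 'I_n.+1) => (a * x + b * y + c * z == n : nat))).
  case: leqP => h.
    rewrite (@dcount2 b c (n - a * x) n b0 c0 (_ : n - a * x <= n)); last by lia.
    apply: eq_bigr => y _; apply: eq_bigr => z _.
    by congr nat_of_bool; apply/eqP/eqP; lia.
  rewrite big1 // => y _; rewrite big1 // => z _.
  by have -> : (a * x + b * y + c * z == n) = false by apply/eqP; lia.
rewrite (pair_bigA _ (fun (x : 'I_n.+1) (yz : 'I_n.+1 * 'I_n.+1) => (a * x + b * yz.1 + c * yz.2 == n : nat))) /=.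
rewrite -sum1_card [RHS]big_mkcond /=; apply: eq_bigr => t _.
by rewrite inE; case: (_ == _).
Qed.

Local Open Scope ring_scope.

Lemma bezout_ab (a b : nat) : coprime a b -> exists u v : int, u * a%:Z + v * b%:Z = 1.
Proof.
move=> /eqP hc; have [u [v huv]] := Bezoutz a b.
exists u, v; rewrite huv /gcdz /=; by rewrite hc.
Qed.

Lemma ub_core (a b c F G p x y z : nat) (T Z : int) :
  (0 < a)%N -> (0 < b)%N -> (0 < F)%N -> (c + G * a = F * b)%N -> (G * a <= c)%N ->
  (F <= a)%N -> coprime a b ->
  (a * x + b * y + c * z)%:Z = b%:Z * T - a%:Z * G%:Z * Z - a%:Z ->
  T - F%:Z * Z <= F%:Z - 1 -> T - a%:Z < F%:Z * p%:Z -> T < 2 * a%:Z ->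
  (z < p)%N /\ (y + F * z)%:Z = T - a%:Z.
Proof.
move=> a0 b0 F0 hc hcG hFa hcop heq h1 h2 h3.
have [u [v huv]] := @bezout_ab a b hcop.
have hcz : (c * z + G * a * z = F * b * z)%N by rewrite -mulnDl hc.
set t : int := (y + F * z)%:Z.
set K : int := (x + 1)%:Z + G%:Z * (Z - z%:Z).
have hK : b%:Z * (T - t) = a%:Z * K.
  rewrite /t /K; lia.
set j : int := u * (T - t) + v * K.
have hj : T - t = a%:Z * j.
  have e1 := congr1 (fun w => v * w) hK.
  have e2 := congr1 (fun w => w * (T - t)) huv.
  rewrite /j; simpl in e1, e2; lia.
have hbj : b%:Z * j = K.
  apply: (@mulfI _ a%:Z); first by apply/eqP; lia.
  rewrite mulrA (mulrC a%:Z) -mulrA -hj; lia.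
have ht : t = (y + F * z)%:Z by [].
have hFz : F%:Z * z%:Z <= t by rewrite ht; lia.
have [hjn|hjp] := ltrP j 0.
  exfalso.
  have hD1 : F%:Z * (z%:Z - Z) <= F%:Z - 1 - a%:Z * j by lia.
  have hD2 : G%:Z * (z%:Z - Z) >= 1 - b%:Z * j by rewrite /K in hbj; lia.
  have hG0 : (0 <= G%:Z) by [].
  have hF0 : (0 <= F%:Z) by [].
  have e1 : G%:Z * (F%:Z * (z%:Z - Z)) <= G%:Z * (F%:Z - 1 - a%:Z * j) by rewrite ler_wpM2l.
  have e2 : F%:Z * (G%:Z * (z%:Z - Z)) >= F%:Z * (1 - b%:Z * j) by rewrite ler_wpM2l.
  have e3 : c%:Z * (- j) >= c%:Z.
    rewrite -{1}(mulr1 c%:Z) ler_wpM2l //; lia.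
  have hcj : c%:Z * j + G%:Z * a%:Z * j = F%:Z * b%:Z * j.
    by rewrite -mulrDl; congr (_ * _); lia.
  have e4 : G%:Z * a%:Z >= G%:Z * F%:Z by rewrite ler_wpM2l //; lia.
  clear -e1 e2 e3 hcj e4 hcG F0; lia.
have [hj0|hj1] := eqVneq j 0.
  exfalso. rewrite hj0 in hbj hj. rewrite /K in hbj.
  have hzZ : (z%:Z - Z) >= 1.
    rewrite leNgt; apply/negP => hlt.
    have : G%:Z * (z%:Z - Z) <= G%:Z * 0 by rewrite ler_wpM2l //; lia.
    lia.
  have : F%:Z * 1 <= F%:Z * (z%:Z - Z) by rewrite ler_wpM2l.
  lia.
have [hj2|hj3] := eqVneq j 1.
  rewrite hj2 in hj; split; last by lia.
  have : (F * z < F * p)%N by lia.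
  by rewrite ltn_pmul2l.
exfalso. have : j >= 2 by lia.
move=> hj2'; have : a%:Z * 2 <= a%:Z * j by rewrite ler_wpM2l.
lia.
Qed.

Lemma residue_decomp (a b : nat) (n : int) : (0 < a)%N -> coprime a b ->
  exists (t0 : nat) (m : int), (t0 < a)%N /\ n = b%:Z * t0%:Z + a%:Z * m.
Proof.
move=> a0 hcop; have [u [v huv]] := @bezout_ab a b hcop.
have hmod := divz_eq (n * v) a%:Z.
have hge : 0 <= ((n * v) %% a%:Z)%Z by rewrite modz_ge0 //; apply/eqP; lia.
have hlt : ((n * v) %% a%:Z < a%:Z)%Z by rewrite ltz_pmod //; lia.
exists (absz ((n * v) %% a%:Z)%Z), (n * u + b%:Z * ((n * v) %/ a%:Z)%Z); split.
  lia.
have e1 := congr1 (fun w => n * w) huv; simpl in e1.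
have e2 := congr1 (fun w => b%:Z * w) hmod; simpl in e2.
rewrite gez0_abs //.
lia.
Qed.

Lemma mul_gt_neg (a : nat) (w : int) : (0 < a)%N -> - a%:Z < a%:Z * w -> 0 <= w.
Proof.
move=> a0 h; rewrite leNgt; apply/negP => hw.
have : a%:Z * w <= a%:Z * (-1) by rewrite ler_wpM2l //; lia.
lia.
Qed.

Definition v1 (a b F G p r : nat) : int :=
  b%:Z * (a%:Z - 1 + p%:Z * F%:Z) - a%:Z * G%:Z * (r%:Z + p%:Z).
Definition v2 (a b F G p r : nat) : int :=
  b%:Z * ((r%:Z + p%:Z) * F%:Z - 1) - a%:Z * G%:Z * (r%:Z + p%:Z - 1).

Lemma maxcaseA (a b F G p r t0 q0 : nat) (M : int) :
  (0 < F)%N -> (F * q0 <= t0)%N -> (t0 < F * q0 + F)%N -> (t0 < a)%N -> (a <= F * r + F)%N ->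
  (p <= q0)%N -> (2 * G * a <= F * b)%N ->
  v1 a b F G p r <= M -> v2 a b F G p r <= M ->
  b%:Z * t0%:Z - a%:Z * G%:Z * (q0%:Z - p%:Z) <= M.
Proof.
rewrite /v1 /v2 => F0 h1 h2 h3 h4 h5 h6 hM1 hM2.
have hq0 : (q0 <= r)%N.
  have : (F * q0 < F * r.+1)%N by lia.
  by rewrite ltn_pmul2l.
have hp : 0 <= p%:Z * (F%:Z * b%:Z - 2 * G%:Z * a%:Z) by apply: mulr_ge0; lia.
have [->|hlt] := eqVneq q0 r.
  have hb : 0 <= b%:Z * (a%:Z - 1 - t0%:Z) by apply: mulr_ge0; lia.
  lia.
have hb : 0 <= b%:Z * (F%:Z * q0%:Z + F%:Z - 1 - t0%:Z) by apply: mulr_ge0; lia.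
have hr : 0 <= (r%:Z - 1 - q0%:Z) * (F%:Z * b%:Z - G%:Z * a%:Z) by apply: mulr_ge0; lia.
lia.
Qed.

Lemma maxcaseB (a b F G p r t0 q0 q1 : nat) (M : int) :
  (0 < F)%N -> (F * q0 <= t0)%N -> (t0 < F * q0 + F)%N ->
  (F * q1 <= t0 + a)%N -> (t0 + a < F * q1 + F)%N -> (a <= F * r + F)%N -> (F * r < a)%N ->
  (q0 < p)%N -> (2 * G * a <= F * b)%N ->
  v1 a b F G p r <= M -> v2 a b F G p r <= M ->
  b%:Z * (t0%:Z + a%:Z) - a%:Z * G%:Z * (q1%:Z + q0%:Z + 1 - p%:Z) <= M.
Proof.
rewrite /v1 /v2 => F0 h1 h2 h3 h4 h5 h6 h7 h8 hM1 hM2.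
have hq1a : (q0 + r < q1.+1)%N.
  have : (F * (q0 + r) < F * q1.+1)%N by lia.
  by rewrite ltn_pmul2l.
have hq1b : (q1 < q0 + r + 2)%N.
  have : (F * q1 < F * (q0 + r + 2))%N by lia.
  by rewrite ltn_pmul2l.
have hp : 0 <= (p%:Z - 1 - q0%:Z) * (F%:Z * b%:Z - 2 * G%:Z * a%:Z) by apply: mulr_ge0; lia.
have [e|ne] := eqVneq q1 (q0 + r + 1)%N.
  rewrite e.
  have hb : 0 <= b%:Z * (F%:Z * q0%:Z + F%:Z - 1 - t0%:Z) by apply: mulr_ge0; lia.
  lia.
have e : q1 = (q0 + r)%N by lia.
rewrite e in h4 *.
have hb : 0 <= b%:Z * (F%:Z * (q0%:Z + r%:Z + 1) - 1 - t0%:Z - a%:Z) by apply: mulr_ge0; lia.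
lia.
Qed.

Lemma lb_core (a b c F G p r : nat) (M n : int) :
  (0 < a)%N -> (0 < b)%N -> (0 < F)%N -> (c + G * a = F * b)%N -> (G * a <= c)%N ->
  coprime a b -> (F * r < a)%N -> (a <= F * r + F)%N -> (p <= r)%N ->
  v1 a b F G p r <= M -> v2 a b F G p r <= M -> M - a%:Z < n ->
  exists f : nat -> nat * nat * nat,
    (forall j, (j <= p)%N -> (a * (f j).1.1 + b * (f j).1.2 + c * (f j).2)%:Z = n) /\
    (forall j1 j2, (j1 <= p)%N -> (j2 <= p)%N -> f j1 = f j2 -> j1 = j2).
Proof.
move=> a0 b0 F0 hc hcG hcop hr1 hr2 hp hM1 hM2 hn.
have h2G : (2 * G * a <= F * b)%N by lia.
have [t0 [m [ht0 hnm]]] := @residue_decomp a b n a0 hcop.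
set q0 := (t0 %/ F)%N.
have hq0a : (F * q0 <= t0)%N by rewrite mulnC leq_trunc_div.
have hq0b : (t0 < F * q0 + F)%N.
  rewrite {1}(divn_eq t0 F) mulnC ltn_add2l ltn_pmod //.
have hcz : forall z : nat, (c * z + G * a * z = F * b * z)%N.
  by move=> z; rewrite -mulnDl hc.
case: (leqP p q0) => hpq.
  have hV := @maxcaseA a b F G p r t0 q0 M F0 hq0a hq0b ht0 hr2 hpq h2G hM1 hM2.
  have hw : 0 <= m + G%:Z * (q0%:Z - p%:Z).
    apply: (@mul_gt_neg a _ a0); lia.
  exists (fun j => ((absz (m + G%:Z * (q0 - j)%N%:Z), (t0 - F * (q0 - j))%N), (q0 - j)%N)).
  split.
    move=> j hj /=.
    have hx : 0 <= m + G%:Z * (q0 - j)%N%:Z.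
      have : G%:Z * (q0%:Z - p%:Z) <= G%:Z * (q0 - j)%N%:Z by rewrite ler_wpM2l //; lia.
      lia.
    have := hcz (q0 - j)%N.
    have : (F * (q0 - j) <= t0)%N by have := leq_mul (leqnn F) (leq_subr j q0); lia.
    move=> hy hcz'.
    have ex : ((absz (m + G%:Z * (q0 - j)%N%:Z))%:Z) = m + G%:Z * (q0 - j)%N%:Z by lia.
    have ey : ((t0 - F * (q0 - j))%N)%:Z = t0%:Z - F%:Z * (q0 - j)%N%:Z by lia.
    rewrite !PoszD !PoszM ex ey.
    move: hcz'; set z := (q0 - j)%N => hcz'.
    have hcz2 : c%:Z * z%:Z + G%:Z * a%:Z * z%:Z = F%:Z * b%:Z * z%:Z by lia.
    rewrite hnm. lia.
  move=> j1 j2 hj1 hj2 [] _ _; lia.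
set q1 := ((t0 + a) %/ F)%N.
have hq1a : (F * q1 <= t0 + a)%N by rewrite mulnC leq_trunc_div.
have hq1b : (t0 + a < F * q1 + F)%N.
  rewrite {1}(divn_eq (t0 + a) F) mulnC ltn_add2l ltn_pmod //.
have hV := @maxcaseB a b F G p r t0 q0 q1 M F0 hq0a hq0b hq1a hq1b hr2 hr1 hpq h2G hM1 hM2.
have hq1r : (q0 + r <= q1)%N.
  have : (F * (q0 + r) < F * q1.+1)%N by lia.
  by rewrite ltn_pmul2l.
have hGq1 : (G * q1 < b)%N.
  rewrite ltnNge; apply/negP => hb.
  have : (F * b <= G * (F * q1))%N by have := leq_mul (leqnn F) hb; lia.
  have : (G * (F * q1) <= G * (2 * a - 1))%N by apply: leq_mul => //; lia.
  nia.
set W := (q1 + q0 + 1 - p)%N.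
have hw : 0 <= m - b%:Z + G%:Z * W%:Z.
  apply: (@mul_gt_neg a _ a0); rewrite /W; lia.
have hWq1 : (W <= q1)%N by rewrite /W; lia.
have hGW : G%:Z * W%:Z <= G%:Z * q1%:Z by rewrite ler_wpM2l //; lia.
exists (fun j => if (j <= q0)%N then ((absz (m + G%:Z * j%:Z), (t0 - F * j)%N), j)
  else ((absz (m - b%:Z + G%:Z * (q1 + q0 + 1 - j)%N%:Z), (t0 + a - F * (q1 + q0 + 1 - j))%N),
        (q1 + q0 + 1 - j)%N)).
split.
  move=> j hj /=.
  case: ifP => hjq /=.
    have hx : 0 <= m + G%:Z * j%:Z by lia.
    have ex : ((absz (m + G%:Z * j%:Z))%:Z) = m + G%:Z * j%:Z by lia.
    have hFj : (F * j <= t0)%N by have := leq_mul (leqnn F) hjq; lia.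
    have ey : ((t0 - F * j)%N)%:Z = t0%:Z - F%:Z * j%:Z by lia.
    rewrite !PoszD !PoszM ex ey.
    have hcz2 : c%:Z * j%:Z + G%:Z * a%:Z * j%:Z = F%:Z * b%:Z * j%:Z by have := hcz j; lia.
    rewrite hnm. lia.
  move/negbT: hjq; rewrite -ltnNge => hjq /=.
  set z := (q1 + q0 + 1 - j)%N.
  have hzW : (W <= z)%N by rewrite /z /W; lia.
  have hzq : (z <= q1)%N by rewrite /z; lia.
  have hx : 0 <= m - b%:Z + G%:Z * z%:Z.
    have : G%:Z * W%:Z <= G%:Z * z%:Z by rewrite ler_wpM2l //; lia.
    lia.
  have ex : ((absz (m - b%:Z + G%:Z * z%:Z))%:Z) = m - b%:Z + G%:Z * z%:Z by lia.
  have hFz : (F * z <= t0 + a)%N by have := leq_mul (leqnn F) hzq; lia.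
  have ey : ((t0 + a - F * z)%N)%:Z = t0%:Z + a%:Z - F%:Z * z%:Z by lia.
  rewrite !PoszD !PoszM ex ey.
  have hcz2 : c%:Z * z%:Z + G%:Z * a%:Z * z%:Z = F%:Z * b%:Z * z%:Z by have := hcz z; lia.
  rewrite hnm. lia.
move=> j1 j2 hj1 hj2 /=.
case: ifP => h1; case: ifP => h2 [] _ hy hz; lia.
Qed.

Lemma main_abs (a b c F G p r : nat) (g T Z : int) :
  (0 < a)%N -> (0 < b)%N -> (0 < c)%N -> (0 < F)%N -> (c + G * a = F * b)%N -> (G * a <= c)%N ->
  coprime a b -> (F * r < a)%N -> (a <= F * r + F)%N -> (1 <= r)%N -> (p <= r)%N ->
  g + a%:Z = b%:Z * T - a%:Z * G%:Z * Z ->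
  T - F%:Z * Z <= F%:Z - 1 -> T - a%:Z < F%:Z * p%:Z -> T < 2 * a%:Z ->
  v1 a b F G p r <= g + a%:Z -> v2 a b F G p r <= g + a%:Z ->
  is_p_frobenius p [:: a; b; c] g.
Proof.
move=> a0 b0 c0 F0 hc hcG hcop hr1 hr2 hr hp hg hT1 hT2 hT3 hM1 hM2.
have hFa : (F <= a)%N by have := leq_mul (leqnn F) hr; lia.
split.
  case: g hg hM1 hM2 => [N|N] hg hM1 hM2; last by [].
  rewrite /dnum dcount3 //.
  set S := [set t : 'I_N.+1 * ('I_N.+1 * 'I_N.+1) | _].
  set Tn := absz (T - a%:Z).
  pose yv (z : nat) := (Tn - F * z)%N.
  pose xv (z : nat) := ((N - b * yv z - c * z) %/ a)%N.
  pose h (z : 'I_p) : 'I_N.+1 * ('I_N.+1 * 'I_N.+1) := (inord (xv z), (inord (yv z), inord z)).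
  have sub : S \subset h @: setT.
    apply/subsetP => t; rewrite inE => /eqP ht.
    have heq : (a * t.1 + b * t.2.1 + c * t.2.2)%:Z = b%:Z * T - a%:Z * G%:Z * Z - a%:Z.
      rewrite ht; clear -hg; lia.
    have [hzp hyz] := @ub_core a b c F G p t.1 t.2.1 t.2.2 T Z a0 b0 F0 hc hcG hFa hcop
        heq hT1 hT2 hT3.
    apply/imsetP; exists (Ordinal hzp) => //=.
    have ey : yv t.2.2 = t.2.1 by rewrite /yv /Tn; lia.
    have ex : xv t.2.2 = t.1.
      rewrite /xv ey.
      have -> : (N - b * t.2.1 - c * t.2.2 = a * t.1)%N by lia.
      by rewrite mulKn.
    rewrite /h /= ex ey !inord_val.
    by case: t {ht hzp hyz ey ex heq} => ? [].
  apply: (leq_trans (subset_leq_card sub)).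
  by apply: (leq_trans (leq_imset_card _ _)); rewrite cardsT card_ord.
move=> n hn.
have [f [hf1 hf2]] := @lb_core a b c F G p r (g + a%:Z) n a0 b0 F0 hc hcG hcop hr1 hr2 hp hM1 hM2
   (ltac:(lia)).
set N := (a * (f 0%N).1.1 + b * (f 0%N).1.2 + c * (f 0%N).2)%N.
have hnN : n = N%:Z by rewrite -(hf1 0%N).
rewrite hnN /dnum dcount3 //.
set S := [set t : 'I_N.+1 * ('I_N.+1 * 'I_N.+1) | _].
have hfN : forall j, (j <= p)%N -> (a * (f j).1.1 + b * (f j).1.2 + c * (f j).2 = N)%N.
  by move=> j hj; have := hf1 j hj; rewrite hnN; lia.
pose h (j : 'I_p.+1) : 'I_N.+1 * ('I_N.+1 * 'I_N.+1) :=
  (inord (f j).1.1, (inord (f j).1.2, inord (f j).2)).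
have bnd : forall j, (j <= p)%N ->
    [/\ ((f j).1.1 < N.+1)%N, ((f j).1.2 < N.+1)%N & ((f j).2 < N.+1)%N].
  move=> j hj; have := hfN j hj.
  have := leq_pmull (f j).1.1 a0; have := leq_pmull (f j).1.2 b0; have := leq_pmull (f j).2 c0.
  move=> h1 h2 h3 h4; split; lia.
have hinj : injective h.
  move=> j1 j2 [] /(congr1 val) /= e1 /(congr1 val) /= e2 /(congr1 val) /= e3.
  have [b11 b12 b13] := bnd j1 (ltn_ord j1 : (j1 <= p)%N).
  have [b21 b22 b23] := bnd j2 (ltn_ord j2 : (j2 <= p)%N).
  rewrite !inordK // in e1 e2 e3.
  apply: val_inj => /=; apply: hf2; [by rewrite -ltnS | by rewrite -ltnS |].
  by move: e1 e2 e3; case: (f j1) => [[x1 y1] z1]; case: (f j2) => [[x2 y2] z2] /= -> -> ->.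
have sub : h @: setT \subset S.
  apply/subsetP => t /imsetP [j _ ->]; rewrite inE /=.
  have hj := hfN j (ltn_ord j : (j <= p)%N).
  have [b1 b2 b3] := bnd j (ltn_ord j : (j <= p)%N).
  by rewrite !inordK // hj.
by have := subset_leq_card sub; rewrite (card_imset _ hinj) cardsT card_ord.
Qed.

Theorem theorem9 (i k p : nat) :
  (3 <= i)%N -> (3 <= k)%N ->
  let r := ((lucas i - 1) %/ fib k)%N in
  (p <= r)%N -> (r, p) != (0%N, 0%N) ->
  let Li := (lucas i)%:Z in
  let Li2 := (lucas (i + 2))%:Z in
  let Lik := (lucas (i + k))%:Z in
  let Fk := (fib k)%:Z in
  let Fk2 := (fib (k - 2))%:Z in
  is_p_frobenius p [:: lucas i; lucas (i + 2); lucas (i + k)]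
    (if Fk2 * Li <= (Li - r%:Z * Fk) * Li2
     then (Li - r%:Z * Fk - 1) * Li2 + (r%:Z + p%:Z) * Lik - Li
     else (Fk - 1) * Li2 + (r%:Z + p%:Z - 1) * Lik - Li).
Proof.
move=> hi hk r hp hrp Li Li2 Lik Fk Fk2.
rewrite /Li /Li2 /Lik /Fk /Fk2 {Li Li2 Lik Fk Fk2}.
set a := lucas i; set b := lucas (i + 2); set c := lucas (i + k).
set F := fib k; set G := fib (k - 2).
have a0 : (0 < a)%N := lucas_pos i.
have b0 : (0 < b)%N := lucas_pos (i + 2).
have c0 : (0 < c)%N := lucas_pos (i + k).
have F0 : (0 < F)%N by rewrite /F (_ : k = k.-1.+1) ?fib_pos //; lia.
have hc : (c + G * a = F * b)%N by apply: luc_key; lia.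
have hcG : (G * a <= c)%N by apply: luc_cGa; lia.
have hcop : coprime a b := coprime_luc2 i.
have hrF1 : (r * F <= a - 1)%N by rewrite /r leq_trunc_div.
have hrF2 : (a - 1 < r.+1 * F)%N by rewrite /r ltn_ceil.
have hr1 : (F * r < a)%N by lia.
have hr2 : (a <= F * r + F)%N by lia.
have hr : (1 <= r)%N.
  case: (posnP r) => // r0; move: hrp; rewrite r0; move: hp; rewrite r0 leqn0 => /eqP ->.
  by rewrite eqxx.
have hpF : (p * F <= r * F)%N by apply: leq_mul.
have hcz : c%:Z = F%:Z * b%:Z - G%:Z * a%:Z by lia.
case: ifP => hcase.
  apply: (@main_abs a b c F G p r _ (a%:Z - 1 + p%:Z * F%:Z) (r%:Z + p%:Z))
     => //; rewrite ?/v1 ?/v2 ?hcz; try lia.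
apply: (@main_abs a b c F G p r _ ((r%:Z + p%:Z) * F%:Z - 1) (r%:Z + p%:Z - 1))
   => //; rewrite ?/v1 ?/v2 ?hcz; try lia.
Qed.
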